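(* Let $ABC$ be a non-equilateral triangle with semiperimeter $s$, circumradius $R$, inradius $r$, circumcenter $O$, centroid $G$ and incenter $I$. Then $$\cos\widehat{GOI}=\frac{6R^2-s^2-r^2+2Rr}{2\sqrt{9R^2-2s^2+2r^2+8Rr}\cdot\sqrt{R^2-2Rr}}.$$
   Context: The centroid $G$ has barycentric coordinates $1:1:1$ and the incenter $I$ has barycentric coordinates $a:b:c$, where $a=BC$, $b=CA$, $c=AB$. *)

(* Defs.v *)
From Stdlib Require Import Reals Lra.
Open Scope R_scope.

Definition point := (R * R)%type.

Definition padd (P Q : point) : point := (fst P + fst Q, snd P + snd Q).
Definition psub (P Q : point) : point := (fst P - fst Q, snd P - snd Q).
Definition pscale (k : R) (P : point) : point := (k * fst P, k * snd P).
Definition dot (u v : point) : R := fst u * fst v + snd u * snd v.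
Definition cross (u v : point) : R := fst u * snd v - snd u * fst v.
Definition norm (u : point) : R := sqrt (dot u u).
Definition pdist (P Q : point) : R := norm (psub P Q).

Definition nondegenerate (A B C : point) : Prop := cross (psub B A) (psub C A) <> 0.

Definition angle (P O Q : point) : R :=
  acos (dot (psub P O) (psub Q O) / (norm (psub P O) * norm (psub Q O))).

Definition side_a (A B C : point) : R := pdist B C.
Definition side_b (A B C : point) : R := pdist C A.
Definition side_c (A B C : point) : R := pdist A B.
Definition semiperimeter (A B C : point) : R :=
  (side_a A B C + side_b A B C + side_c A B C) / 2.

Definition centroid (A B C : point) : point :=
  pscale (/3) (padd A (padd B C)).

(* incenter: barycentric a:b:c *)
Definition incenter (A B C : point) : point :=
  let a := side_a A B C in let b := side_b A B C in let c := side_c A B C in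
  pscale (/ (a + b + c)) (padd (pscale a A) (padd (pscale b B) (pscale c C))).

Definition inradius (A B C : point) : R :=
  Rabs (cross (psub C B) (psub (incenter A B C) B)) / pdist B C.

Definition is_circumcenter (A B C O : point) : Prop :=
  pdist O A = pdist O B /\ pdist O B = pdist O C.

Definition equilateral (A B C : point) : Prop :=
  side_a A B C = side_b A B C /\ side_b A B C = side_c A B C.

(* Main.v *)
Require Import Defs.
From Stdlib Require Import Reals Lra Psatz.
Open Scope R_scope.

Lemma pdist_sq (P Q : point) : pdist P Q * pdist P Q =
  (fst P - fst Q) * (fst P - fst Q) + (snd P - snd Q) * (snd P - snd Q).
Proof.
  unfold pdist, norm, dot, psub; simpl. apply sqrt_sqrt. apply Rplus_le_le_0_compat; apply Rle_0_sqr.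
Qed.

Lemma pdist_nonneg (P Q : point) : 0 <= pdist P Q.
Proof. unfold pdist, norm. apply sqrt_pos. Qed.

Lemma inradius_eq (A B C : point) : nondegenerate A B C ->
  inradius A B C = Rabs (cross (psub B A) (psub C A)) / (side_a A B C + side_b A B C + side_c A B C).
Proof.
  intro Hnd. unfold inradius, incenter.
  change (pdist B C) with (side_a A B C).
  assert (Ha := pdist_sq B C). assert (Hb := pdist_sq C A). assert (Hc := pdist_sq A B).
  assert (Ha0 := pdist_nonneg B C). assert (Hb0 := pdist_nonneg C A). assert (Hc0 := pdist_nonneg A B).
  unfold side_a, side_b, side_c in *.
  set (a := pdist B C) in *. set (b := pdist C A) in *. set (c := pdist A B) in *.
  destruct A as [xa ya], B as [xb yb], C as [xc yc]. unfold nondegenerate, cross, psub in *. simpl in *.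
  assert (Hapos : a <> 0).
  { intro H0. rewrite H0 in Ha. pose proof (Rle_0_sqr (xb-xc)). pose proof (Rle_0_sqr (yb-yc)). unfold Rsqr in *.
    assert (E1 : (xb - xc)*(xb-xc) = 0) by lra. assert (E2 : (yb - yc)*(yb-yc) = 0) by lra.
    apply Rmult_integral in E1. apply Rmult_integral in E2.
    assert (xb - xc = 0) by (destruct E1; lra). assert (yb - yc = 0) by (destruct E2; lra).
    apply Hnd. replace xb with xc by lra. replace yb with yc by lra. ring. }
  assert (HS : a + b + c <> 0) by lra.
  replace ((xc - xb) * (/ (a + b + c) * (a * ya + (b * yb + c * yc)) - yb) -
    (yc - yb) * (/ (a + b + c) * (a * xa + (b * xb + c * xc)) - xb))
   with (a / (a+b+c) * ((xb - xa) * (yc - ya) - (yb - ya) * (xc - xa))) by (field; auto).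
  rewrite Rabs_mult. rewrite (Rabs_pos_eq (a / (a+b+c))).
  2: { apply Rlt_le, Rdiv_lt_0_compat; lra. }
  field. split; auto.
Qed.
Lemma final (g i : point) (N X Y: R): X = 9*dot g g -> Y = dot i i -> N = 6*dot g i ->
  cos (acos (dot g i / (norm g * norm i))) = N / (2*sqrt X * sqrt Y).
Proof.
  intros -> -> ->.
  assert (Hg: 0 <= dot g g) by (unfold dot; nra).
  assert (Hi: 0 <= dot i i) by (unfold dot; nra).
  rewrite sqrt_mult by lra.
  replace (sqrt 9) with 3 by (rewrite <- (sqrt_square 3) by lra; f_equal; lra).
  unfold norm.
  assert (HG := sqrt_sqrt _ Hg). assert (HI := sqrt_sqrt _ Hi).
  assert (HG0 := sqrt_pos (dot g g)). assert (HI0 := sqrt_pos (dot i i)).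
  set (p := sqrt (dot g g) * sqrt (dot i i)).
  assert (Hcs : (dot g i)^2 <= (dot g g) * (dot i i)).
  { unfold dot. destruct g as [g1 g2], i as [i1 i2]; simpl. pose proof (Rle_0_sqr (g1*i2-g2*i1)). unfold Rsqr in *. nra. }
  assert (Hp0 : 0 <= p) by (unfold p; nra).
  destruct (Req_dec p 0) as [Hp|Hp].
  - replace (2 * (3 * sqrt (dot g g)) * sqrt (dot i i)) with (6*p) by (unfold p; ring).
    rewrite Hp. rewrite Rmult_0_r. unfold Rdiv. rewrite Rinv_0, !Rmult_0_r, acos_0, cos_PI2. reflexivity.
  - assert (Hp' : 0 < p) by lra.
    assert (Hpp : p*p = dot g g * dot i i) by (unfold p; nra).
    assert (Hb : Rabs (dot g i) <= p).
    { rewrite <- (Rabs_pos_eq p) by lra. apply Rsqr_le_abs_0. unfold Rsqr. nra. }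
    rewrite cos_acos.
    + replace (2 * (3 * sqrt (dot g g)) * sqrt (dot i i)) with (6*p) by (unfold p; ring).
      field. lra.
    + split.
      * apply (Rmult_le_reg_r p); [lra|]. unfold Rdiv. rewrite Rmult_assoc, Rinv_l by lra.
        revert Hb. unfold Rabs. destruct Rcase_abs; intros; lra.
      * apply (Rmult_le_reg_r p); [lra|]. unfold Rdiv. rewrite Rmult_assoc, Rinv_l by lra.
        revert Hb. unfold Rabs. destruct Rcase_abs; intros; lra.
Qed.

Lemma final' g1 g2 i1 i2 N X Y: X = 9*(g1*g1+g2*g2) -> Y = i1*i1+i2*i2 -> N = 6*(g1*i1+g2*i2) ->
  cos (acos ((g1*i1+g2*i2) / (norm (g1,g2) * norm (i1,i2)))) = N/(2*sqrt X*sqrt Y).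
Proof. exact (final (g1,g2) (i1,i2) N X Y). Qed.

Theorem mainTheorem6 (A B C O : point) :
  nondegenerate A B C ->
  ~ equilateral A B C ->
  is_circumcenter A B C O ->
  let s := semiperimeter A B C in
  let R := pdist O A in
  let r := inradius A B C in
  let G := centroid A B C in
  let I := incenter A B C in
  cos (angle G O I) =
    (6 * R ^ 2 - s ^ 2 - r ^ 2 + 2 * R * r) /
    (2 * sqrt (9 * R ^ 2 - 2 * s ^ 2 + 2 * r ^ 2 + 8 * R * r) * sqrt (R ^ 2 - 2 * R * r)).
Proof.
  intros Hnd _ [H1 H2]. cbv zeta.
  rewrite (inradius_eq _ _ _ Hnd).
  unfold angle.
  unfold semiperimeter, centroid, incenter, side_a, side_b, side_c in *.
  assert (Fa := pdist_sq B C); assert (Fb := pdist_sq C A); assert (Fc := pdist_sq A B).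
  assert (FR := pdist_sq O A); assert (FRB := pdist_sq O B); assert (FRC := pdist_sq O C).
  assert (Ha0 := pdist_nonneg B C); assert (Hb0 := pdist_nonneg C A); assert (Hc0 := pdist_nonneg A B); assert (HR0 := pdist_nonneg O A).
  rewrite <- H1 in FRB; rewrite <- H2, <- H1 in FRC.
  set (a := pdist B C) in *; set (b := pdist C A) in *; set (c := pdist A B) in *; set (R := pdist O A) in *.
  clearbody a b c R.
  destruct A as [xa ya], B as [xb yb], C as [xc yc], O as [xo yo]; unfold nondegenerate, cross, psub, pscale, padd, dot in *; simpl in *.
  set (K := (xb - xa) * (yc - ya) - (yb - ya) * (xc - xa)) in *.
  assert (Hapos : a <> 0).
  { intro H0. rewrite H0 in Fa. pose proof (Rle_0_sqr (xb-xc)). pose proof (Rle_0_sqr (yb-yc)). unfold Rsqr in *.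
    assert (E1 : (xb - xc)*(xb-xc) = 0) by lra. assert (E2 : (yb - yc)*(yb-yc) = 0) by lra.
    apply Rmult_integral in E1. apply Rmult_integral in E2.
    assert (xb - xc = 0) by (destruct E1; lra). assert (yb - yc = 0) by (destruct E2; lra).
    apply Hnd. unfold K. replace xb with xc by lra. replace yb with yc by lra. ring. }
  assert (HS : 0 < a + b + c) by lra.
  assert (kk : Rabs K * Rabs K = K * K).
  { rewrite <- Rabs_mult. apply Rabs_pos_eq. pose proof (Rle_0_sqr K). unfold Rsqr in *. lra. }
  assert (k0 : 0 <= Rabs K) by apply Rabs_pos.
  set (k := Rabs K) in *. clearbody k.
  assert (HH : 4*(k*k) = 2*(a*a)*(b*b) + 2*(b*b)*(c*c)+2*(c*c)*(a*a) - (a*a)*(a*a) - (b*b)*(b*b) - (c*c)*(c*c)).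
  { rewrite kk, Fa, Fb, Fc. unfold K. ring. }
  assert (eP : 2*((xo-xa)*(xb-xa)+(yo-ya)*(yb-ya)) = (xb-xa)*(xb-xa)+(yb-ya)*(yb-ya)) by lra.
  assert (eQ : 2*((xo-xa)*(xc-xa)+(yo-ya)*(yc-ya)) = (xc-xa)*(xc-xa)+(yc-ya)*(yc-ya)) by lra.
  assert (ex : 2*K*(xo-xa) = ((xb-xa)*(xb-xa)+(yb-ya)*(yb-ya))*(yc-ya) - ((xc-xa)*(xc-xa)+(yc-ya)*(yc-ya))*(yb-ya)).
  { assert (h1 := f_equal (Rmult (yc-ya)) eP). assert (h2 := f_equal (Rmult (yb-ya)) eQ). unfold K. lra. }
  assert (ey : 2*K*(yo-ya) = ((xc-xa)*(xc-xa)+(yc-ya)*(yc-ya))*(xb-xa) - ((xb-xa)*(xb-xa)+(yb-ya)*(yb-ya))*(xc-xa)).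
  { assert (h1 := f_equal (Rmult (xc-xa)) eP). assert (h2 := f_equal (Rmult (xb-xa)) eQ). unfold K. lra. }
  assert (e4 : 4*(R*R)*(K*K) = (2*K*(xo-xa))*(2*K*(xo-xa)) + (2*K*(yo-ya))*(2*K*(yo-ya))).
  { rewrite FR. ring. }
  rewrite ex, ey in e4.
  assert (Rk : a*b*c = 2*R*k).
  { apply Rsqr_inj.
    - apply Rmult_le_pos; [apply Rmult_le_pos|]; lra.
    - apply Rmult_le_pos; [apply Rmult_le_pos|]; lra.
    - unfold Rsqr. replace (2*R*k*(2*R*k)) with (4*(R*R)*(k*k)) by ring. rewrite kk, e4.
      replace (a*b*c*(a*b*c)) with ((a*a)*(b*b)*(c*c)) by ring. rewrite Fa, Fb, Fc. ring. }
  set (S := a+b+c) in *.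
  idtac.
  Ltac mk m H := let t := type of H in match t with ?x = ?y => assert (m*(x-y)=0) by (rewrite H; ring) end.
  mk (S*a) FR. mk (S*b) FR. mk (S*c) FR.
  mk (S*a) FRB. mk (S*b) FRB. mk (S*c) FRB.
  mk (S*a) FRC. mk (S*b) FRC. mk (S*c) FRC.
  mk (S*a) Fa. mk (S*b) Fa. mk (S*c) Fa.
  mk (S*a) Fb. mk (S*b) Fb. mk (S*c) Fb.
  mk (S*a) Fc. mk (S*b) Fc. mk (S*c) Fc.
  mk (a*b) Fc. mk (b*c) Fa. mk (c*a) Fb.
  mk S Rk.
  assert (HSne : S <> 0) by lra.
  assert (HSS : S*S <> 0) by (apply Rmult_integral_contrapositive_currified; exact HSne).
  apply final'.
  - apply (Rmult_eq_reg_r (S*S)); [| exact HSS].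
    replace (_ * (S*S)) with (9*R*R*S*S - S*S*S*S/2 + 2*(k*k) + 8*R*k*S) by (field; exact HSne).
    match goal with |- _ = ?t => replace t with (S*S*((xa+xb+xc-3*xo)*(xa+xb+xc-3*xo)+(ya+yb+yc-3*yo)*(ya+yb+yc-3*yo))) by (unfold S; field; exact HSne) end.
    unfold S in *. lra.
  - apply (Rmult_eq_reg_r (S*S)); [| exact HSS].
    replace (_ * (S*S)) with (R*R*S*S - 2*R*k*S) by (field; exact HSne).
    match goal with |- _ = ?t => replace t with ((a*(xa-xo)+b*(xb-xo)+c*(xc-xo))*(a*(xa-xo)+b*(xb-xo)+c*(xc-xo)) + (a*(ya-yo)+b*(yb-yo)+c*(yc-yo))*(a*(ya-yo)+b*(yb-yo)+c*(yc-yo))) by (unfold S; field; exact HSne) end.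
    unfold S in *. lra.
  - apply (Rmult_eq_reg_r (S*S)); [| exact HSS].
    replace (_ * (S*S)) with (6*R*R*S*S - S*S*S*S/4 - k*k + 2*R*k*S) by (field; exact HSne).
    match goal with |- _ = ?t => replace t with (2*S*((xa+xb+xc-3*xo)*(a*(xa-xo)+b*(xb-xo)+c*(xc-xo)) + (ya+yb+yc-3*yo)*(a*(ya-yo)+b*(yb-yo)+c*(yc-yo)))) by (unfold S; field; exact HSne) end.
    unfold S in *. lra.
Qed.
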